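(* The property that the path metric of the Cayley graph is conditionally strictly negative definite is not stable under amalgamated free products: there exist groups $\Gamma_1,\Gamma_2$ with generating sets $S_1,S_2$ and a common subgroup $H$ such that the path metrics on $\mathrm{Cay}(\Gamma_1,S_1)$ and $\mathrm{Cay}(\Gamma_2,S_2)$ are conditionally strictly negative definite, while the path metric on $\mathrm{Cay}(\Gamma_1\ast_H\Gamma_2,S_1\cup S_2)$ is not.
   Context: $\Gamma_1\ast_H\Gamma_2$ is the amalgamated free product. $\mathrm{Cay}(\Gamma,S)$ is the graph with vertex set $\Gamma$ and edges $\{g,gs\}$, $s\in S\cup S^{-1}$, $gs\neq g$; its path metric is the shortest-path distance. A symmetric real function $K$ on $\Gamma\times\Gamma$ is conditionally strictly negative definite if for every finitely supported $\lambda\colon\Gamma\to\mathbb{C}$, $\lambda\neq0$, with $\sum_g\lambda(g)=0$ one has $\sum_{g,h}\lambda(g)\overline{\lambda(h)}K(g,h)<0$. *)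

(* Defs.v *)
From HB Require Import structures.
From Stdlib Require Import Reals ClassicalEpsilon.
From mathcomp Require Import all_boot all_order all_algebra.
From mathcomp Require Import Rstruct.
From mathcomp.real_closed Require Import complex.
Set Implicit Arguments. Unset Strict Implicit. Unset Printing Implicit Defensive.
Import Order.TTheory GRing.Theory Num.Theory.

Record group := Group {
  carrier :> Type;
  gmul : carrier -> carrier -> carrier;
  gone : carrier;
  ginv : carrier -> carrier;
  gmulA : forall x y z, gmul x (gmul y z) = gmul (gmul x y) z;
  gmul1 : forall x, gmul gone x = x;
  gmulV : forall x, gmul (ginv x) x = gone
}.

Definition is_hom (G K : group) (f : G -> K) : Prop :=
  forall x y, f (gmul x y) = gmul (f x) (f y).

Inductive in_gen (G : group) (S : G -> Prop) : G -> Prop :=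
| in_gen_one : in_gen S (gone G)
| in_gen_mulS : forall g s, in_gen S g -> S s -> in_gen S (gmul g s)
| in_gen_mulSV : forall g s, in_gen S g -> S s -> in_gen S (gmul g (ginv s)).

Definition generates (G : group) (S : G -> Prop) : Prop :=
  forall g : G, in_gen S g.

Definition cayley_adj (G : group) (S : G -> Prop) (g h : G) : Prop :=
  g <> h /\ exists s, S s /\ (h = gmul g s \/ h = gmul g (ginv s)).

Inductive walk (G : group) (S : G -> Prop) : nat -> G -> G -> Prop :=
| walk0 : forall g, walk S 0 g g
| walkS : forall n g h k, cayley_adj S g h -> walk S n h k -> walk S n.+1 g k.

(* shortest-path distance (well defined when S generates G) *)
Definition path_metric (G : group) (S : G -> Prop) (g h : G) : nat :=
  epsilon (inhabits 0%N)
    (fun n => walk S n g h /\ forall m, walk S m g h -> (n <= m)%N).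

Local Open Scope ring_scope.
(* A finitely supported lambda : G -> C is given by finitely many distinct
   points x_0..x_{n-1} (x injective) carrying the values c_0..c_{n-1}. *)
Definition cond_strict_neg_def (G : group) (K : G -> G -> R) : Prop :=
  (forall g h, K g h = K h g) /\
  forall (n : nat) (x : 'I_n -> G) (c : 'I_n -> R[i]),
    injective x ->
    (exists i, c i != 0) ->
    \sum_(i < n) c i = 0 ->
    \sum_(i < n) \sum_(j < n) c i * (c j)^* * ((K (x i) (x j))%:C)%C < 0.

Definition path_metric_CSND (G : group) (S : G -> Prop) : Prop :=
  cond_strict_neg_def (fun g h => ((path_metric S g h)%:R : R)).

Definition is_amalgam (H G1 G2 : group) (j1 : H -> G1) (j2 : H -> G2)
    (A : group) (i1 : G1 -> A) (i2 : G2 -> A) : Prop :=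
  [/\ is_hom i1, is_hom i2, (forall h, i1 (j1 h) = i2 (j2 h)) &
    forall (K : group) (f1 : G1 -> K) (f2 : G2 -> K),
      is_hom f1 -> is_hom f2 -> (forall h, f1 (j1 h) = f2 (j2 h)) ->
      exists f : A -> K, [/\ is_hom f, (forall x, f (i1 x) = f1 x),
        (forall x, f (i2 x) = f2 x) &
        forall f' : A -> K, is_hom f' -> (forall x, f' (i1 x) = f1 x) ->
          (forall x, f' (i2 x) = f2 x) -> forall a, f' a = f a]].

Definition amalgam_gens (G1 G2 A : group) (i1 : G1 -> A) (i2 : G2 -> A)
    (S1 : G1 -> Prop) (S2 : G2 -> Prop) : A -> Prop :=
  fun a => (exists s, S1 s /\ a = i1 s) \/ (exists s, S2 s /\ a = i2 s).

(* Main.v *)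
Require Import Defs.
From Stdlib Require Import Reals ClassicalEpsilon Classical.
From mathcomp Require Import all_boot all_order all_algebra.
From mathcomp Require Import Rstruct.
From mathcomp.real_closed Require Import complex.
Set Implicit Arguments. Unset Strict Implicit. Unset Printing Implicit Defensive.
Import Order.TTheory GRing.Theory Num.Theory.

Lemma gmulV' (G : group) (x : G) : gmul x (ginv x) = gone G.
Proof.
have e : gmul x (ginv x) = gmul (gmul (ginv (gmul x (ginv x))) (gmul x (ginv x))) (gmul x (ginv x)).
  by rewrite gmulV gmul1.
rewrite e -gmulA -[gmul (gmul x (ginv x)) (gmul x (ginv x))]gmulA.
by rewrite [gmul (ginv x) (gmul x (ginv x))]gmulA gmulV gmul1 gmulV.
Qed.
Lemma gmul1' (G : group) (x : G) : gmul x (gone G) = x.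
Proof. by rewrite -(gmulV x) gmulA gmulV' gmul1. Qed.
Lemma gcancel (G : group) (a b c : G) : gmul a b = gmul a c -> b = c.
Proof. by move=> e; rewrite -(gmul1 b) -(gmul1 c) -(gmulV a) -!gmulA e. Qed.

Lemma hom1 (G K : group) (f : G -> K) : is_hom f -> f (gone G) = gone K.
Proof.
move=> hf; apply: (@gcancel _ (f (gone G))).
by rewrite -hf gmul1 gmul1'.
Qed.

Lemma homV (G K : group) (f : G -> K) x : is_hom f -> f (ginv x) = ginv (f x).
Proof.
move=> hf; apply: (@gcancel _ (f x)).
by rewrite -hf gmulV' hom1 // gmulV'.
Qed.

Lemma walk0E (G : group) (S : G -> Prop) g h : walk S 0 g h -> g = h.
Proof. by move=> w; inversion w. Qed.

Lemma walk1E (G : group) (S : G -> Prop) g h : walk S 1 g h -> cayley_adj S g h.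
Proof. move=> w; inversion w; subst. by move/walk0E: H1 => <-. Qed.

Lemma pm_eq (G : group) (S : G -> Prop) g h n :
  walk S n g h -> (forall m, walk S m g h -> (n <= m)%N) -> path_metric S g h = n.
Proof.
move=> w mn; rewrite /path_metric.
have [] := epsilon_spec (inhabits 0%N)
    (fun n => walk S n g h /\ forall m, walk S m g h -> (n <= m)%N) (ex_intro _ n (conj w mn)).
set e := epsilon _ _ => we me.
by apply/eqP; rewrite eqn_leq me // mn.
Qed.

Lemma pm0 (G : group) (S : G -> Prop) g : path_metric S g g = 0%N.
Proof. by apply: pm_eq => //; apply: walk0. Qed.

Lemma pm1 (G : group) (S : G -> Prop) g h : cayley_adj S g h -> path_metric S g h = 1%N.
Proof.
move=> a; apply: pm_eq; first by apply: walkS a (walk0 _ _).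
case=> // /walk0E e; by case: a.
Qed.

Lemma pm2 (G : group) (S : G -> Prop) g k h : cayley_adj S g k -> cayley_adj S k h ->
  g <> h -> ~ cayley_adj S g h -> path_metric S g h = 2%N.
Proof.
move=> a1 a2 ne na; apply: pm_eq; first by apply: walkS a1 (walkS a2 (walk0 _ _)).
case=> [/walk0E //|[|m] //]; by move/walk1E.
Qed.

Lemma pm_full (G : group) (g h : G) : g <> h -> path_metric (fun _ => True) g h = 1%N.
Proof.
move=> ne; apply: pm1; split=> //; exists (gmul (ginv g) h); split=> //; left.
by rewrite gmulA gmulV' gmul1.
Qed.

Lemma full_gen (G : group) : generates (fun _ : G => True).
Proof. by move=> g; rewrite -(gmul1 g); apply: in_gen_mulS; [apply: in_gen_one|]. Qed.
Local Open Scope ring_scope.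
Lemma full_CSND (G : group) : path_metric_CSND (fun _ : G => True).
Proof.
split.
  move=> g h; case: (classic (g = h)) => [->//|ne]; rewrite !pm_full //.
  by move=> e; apply: ne.
move=> n x c inj [i0 nz] s0.
have E : forall i j, (((path_metric (fun _ : G => True) (x i) (x j))%:R : R)%:C)%C
      = ((i != j)%:R : R[i]).
  move=> i j; rewrite rmorph_nat; case: (eqVneq i j) => [->|ne].
    by rewrite pm0.
  by rewrite pm_full // => /inj e; rewrite e eqxx in ne.
have inner : forall i, \sum_(j < n) c i * (c j)^* * ((i != j)%:R : R[i])
      = c i * (\sum_(j < n) c j)^* - c i * (c i)^*.
  move=> i; rewrite (bigD1 i) //= eqxx mulr0 add0r.
  rewrite rmorph_sum mulr_sumr [in RHS](bigD1 i) //= addrC addrK.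
  by apply: eq_bigr => j; rewrite eq_sym => ->; rewrite mulr1.
under eq_bigr => i _ do (under eq_bigr => j _ do rewrite E; rewrite inner s0 rmorph0 mulr0 add0r).
rewrite sumrN oppr_lt0 (bigD1 i0) //=; apply: ltr_wpDr.
  by apply: sumr_ge0 => i _; rewrite -normCK exprn_ge0.
by rewrite -normCK exprn_gt0 // normr_gt0.
Qed.

Ltac z3 x := case: x => [[|[|[|//]]] ?].
Ltac z6 x := case: x => [[|[|[|[|[|[|//]]]]]] ?].
Ltac kc x := let a := fresh "a" in let e := fresh "e" in case: x => a e; z3 a; case: e.

Definition Zg6 : group := @Defs.Group 'Z_6 (fun x y => x + y) 0 (fun x => - x)
  (@addrA _) (@add0r _) (@addNr _).
Definition Zg3 : group := @Defs.Group 'Z_3 (fun x y => x + y) 0 (fun x => - x)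
  (@addrA _) (@add0r _) (@addNr _).

Definition jj (h : Zg3) : Zg6 := (inZp (2 * h) : 'Z_6).

Lemma jj_hom : is_hom jj.
Proof.
move=> x y; apply/eqP; z3 x; z3 y; by vm_compute.
Qed.

Lemma jj_inj : injective jj.
Proof. move=> x y /eqP E; apply/eqP; move: E; z3 x; z3 y; by vm_compute. Qed.

Definition kT := ('Z_3 * bool)%type.
Definition kmul (x y : kT) : kT :=
  (x.1 + (if x.2 then - y.1 else y.1), x.2 (+) y.2).
Definition kinv (x : kT) : kT := (if x.2 then x.1 else - x.1, x.2).
Definition kone : kT := (0, false).

Lemma kmulA (x y z : kT) : kmul x (kmul y z) = kmul (kmul x y) z.
Proof.
apply/eqP; kc x; kc y; kc z; by vm_compute.
Qed.
Lemma kmul1 (x : kT) : kmul kone x = x.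
Proof.
apply/eqP; kc x; by vm_compute.
Qed.
Lemma kmulV (x : kT) : kmul (kinv x) x = kone.
Proof.
apply/eqP; kc x; by vm_compute.
Qed.
Definition Kg : group := @Defs.Group kT kmul kone kinv kmulA kmul1 kmulV.

Definition f1 (x : Zg6) : Kg := (0, odd x).
Definition f2 (x : Zg6) : Kg := (if odd x then 1 else 0, odd x).

Lemma f1_hom : is_hom f1.
Proof.
move=> x y; apply/eqP; z6 x; z6 y; by vm_compute.
Qed.
Lemma f2_hom : is_hom f2.
Proof.
move=> x y; apply/eqP; z6 x; z6 y; by vm_compute.
Qed.
Lemma f12 (h : Zg3) : f1 (jj h) = f2 (jj h).
Proof.
apply/eqP; z3 h; by vm_compute.
Qed.

Lemma BF (p q r : 'Z_6) : odd p -> odd q ->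
  [&& f2 q != kmul (f1 p) (f1 r), f2 q != kmul (f1 p) (kinv (f1 r)),
      f2 q != kmul (f1 p) (f2 r), f2 q != kmul (f1 p) (kinv (f2 r)),
      f1 p != kmul (f2 q) (f1 r), f1 p != kmul (f2 q) (kinv (f1 r)),
      f1 p != kmul (f2 q) (f2 r), f1 p != kmul (f2 q) (kinv (f2 r)) &
      f1 p != f2 q].
Proof.
move=> hp hq; move: hp hq; z6 p; z6 q; z6 r; by vm_compute.
Qed.

Notation Sg i1 i2 := (amalgam_gens i1 i2 (fun _ : Zg6 => True) (fun _ : Zg6 => True)).

Lemma fold6 (A : group) (i1 i2 : Zg6 -> A) : is_amalgam jj jj i1 i2 ->
  exists F : A -> Zg6, (forall x, F (i1 x) = x) /\ (forall x, F (i2 x) = x).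
Proof.
case=> _ _ _ U.
have [F [_ F1 F2 _]] := U Zg6 id id (fun _ _ => erefl) (fun _ _ => erefl) (fun _ => erefl).
by exists F.
Qed.

Lemma foldK (A : group) (i1 i2 : Zg6 -> A) : is_amalgam jj jj i1 i2 ->
  exists F : A -> Kg, [/\ is_hom F, (forall x, F (i1 x) = f1 x) & (forall x, F (i2 x) = f2 x)].
Proof.
case=> _ _ _ U.
have [F [? F1 F2 _]] := U Kg f1 f2 f1_hom f2_hom f12.
by exists F.
Qed.

Lemma adj1 (A : group) (i1 i2 : Zg6 -> A) : is_amalgam jj jj i1 i2 ->
  forall g h : Zg6, g != h -> cayley_adj (Sg i1 i2) (i1 g) (i1 h).
Proof.
move=> Ham g h ne; split.
  move=> e; have [F [F1 F2]] := fold6 Ham; move: (congr1 F e); rewrite !F1 => e'.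
  by rewrite e' eqxx in ne.
exists (i1 (gmul (ginv g) h)); split; first by left; exists (gmul (ginv g) h).
left; case: Ham => hi1 _ _ _; by rewrite -hi1 gmulA gmulV' gmul1.
Qed.

Lemma adj2 (A : group) (i1 i2 : Zg6 -> A) : is_amalgam jj jj i1 i2 ->
  forall g h : Zg6, g != h -> cayley_adj (Sg i1 i2) (i2 g) (i2 h).
Proof.
move=> Ham g h ne; split.
  move=> e; have [F [F1 F2]] := fold6 Ham; move: (congr1 F e); rewrite !F2 => e'.
  by rewrite e' eqxx in ne.
exists (i2 (gmul (ginv g) h)); split; first by right; exists (gmul (ginv g) h).
left; case: Ham => _ hi2 _ _; by rewrite -hi2 gmulA gmulV' gmul1.
Qed.

Lemma L1 (A : group) (i1 i2 : Zg6 -> A) : is_amalgam jj jj i1 i2 ->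
  forall g h : Zg6, g != h -> path_metric (Sg i1 i2) (i1 g) (i1 h) = 1%N.
Proof. by move=> Ham g h ne; apply: pm1; apply: adj1. Qed.

Lemma L2 (A : group) (i1 i2 : Zg6 -> A) : is_amalgam jj jj i1 i2 ->
  forall g h : Zg6, g != h -> path_metric (Sg i1 i2) (i2 g) (i2 h) = 1%N.
Proof. by move=> Ham g h ne; apply: pm1; apply: adj2. Qed.

Lemma Lm1 (A : group) (i1 i2 : Zg6 -> A) : is_amalgam jj jj i1 i2 ->
  forall (a : Zg3) (h : Zg6), jj a != h -> path_metric (Sg i1 i2) (i1 (jj a)) (i2 h) = 1%N.
Proof. move=> Ham a h ne; have [_ _ e _] := Ham; rewrite e; exact: L2. Qed.

Lemma Lm2 (A : group) (i1 i2 : Zg6 -> A) : is_amalgam jj jj i1 i2 ->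
  forall (a : Zg3) (h : Zg6), h != jj a -> path_metric (Sg i1 i2) (i2 h) (i1 (jj a)) = 1%N.
Proof. move=> Ham a h ne; have [_ _ e _] := Ham; rewrite e; exact: L2. Qed.

Lemma i0eq (A : group) (i1 i2 : Zg6 -> A) : is_amalgam jj jj i1 i2 -> i1 0 = i2 0.
Proof.
move=> [_ _ e _]; have := e 0; have -> : jj 0 = 0 by apply/eqP.
done.
Qed.

Ltac kill B e :=
  repeat (let B1 := fresh "B" in case/andP: B => B1 B; try (exact: (negP B1 (introT eqP e))));
  exact: (negP B (introT eqP e)).

Lemma L3 (A : group) (i1 i2 : Zg6 -> A) : is_amalgam jj jj i1 i2 ->
  forall p q : Zg6, odd p -> odd q -> path_metric (Sg i1 i2) (i1 p) (i2 q) = 2%N.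
Proof.
move=> Ham p q hp hq.
have [F [hF F1 F2]] := foldK Ham.
have B := @BF p q 0 hp hq.
apply: (@pm2 _ _ _ (i1 0)).
- by apply: adj1 => //; apply/eqP => e0; move: hp; first [by rewrite e0 | by rewrite -e0].
- by rewrite (i0eq Ham); apply: adj2 => //; apply/eqP => e0; move: hq; first [by rewrite e0 | by rewrite -e0].
- move=> e; move: (congr1 F e); rewrite F1 F2 => e'.
  by kill B e'.
case=> _ [s [Ss E]].
move: E; case: Ss => [[r [_ ->]]|[r [_ ->]]] E; have {B} B := @BF p q r hp hq;
  case: E => E; move: (congr1 F E); rewrite hF ?(@homV _ _ F _ hF) !(F1, F2) => e';
  by kill B e'.
Qed.

Lemma L3' (A : group) (i1 i2 : Zg6 -> A) : is_amalgam jj jj i1 i2 ->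
  forall p q : Zg6, odd p -> odd q -> path_metric (Sg i1 i2) (i2 q) (i1 p) = 2%N.
Proof.
move=> Ham p q hp hq.
have [F [hF F1 F2]] := foldK Ham.
have B := @BF p q 0 hp hq.
apply: (@pm2 _ _ _ (i2 0)).
- by apply: adj2 => //; apply/eqP => e0; move: hq; first [by rewrite e0 | by rewrite -e0].
- by rewrite -(i0eq Ham); apply: adj1 => //; apply/eqP => e0; move: hp; first [by rewrite e0 | by rewrite -e0].
- move=> e; move: (congr1 F e); rewrite F1 F2 => e'.
  by kill B (esym e').
case=> _ [s [Ss E]].
move: E; case: Ss => [[r [_ ->]]|[r [_ ->]]] E; have {B} B := @BF p q r hp hq;
  case: E => E; move: (congr1 F E); rewrite hF ?(@homV _ _ F _ hF) !(F1, F2) => e';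
  by kill B e'.
Qed.

Arguments jj : simpl never.

Definition xs (A : group) (i1 i2 : Zg6 -> A) (i : 'I_9) : A :=
  if (i < 3)%N then i1 (jj (inZp i : 'Z_3))
  else if (i < 6)%N then i1 (inZp (2 * (i - 3) + 1) : 'Z_6)
  else i2 (inZp (2 * (i - 6) + 1) : 'Z_6).

Definition cls (i : 'I_9) : nat := if (i < 3)%N then 0 else if (i < 6)%N then 1 else 2.
Definition dz (i j : 'I_9) : nat :=
  if i == j then 0 else if cls i + cls j == 3 then 2 else 1.

Lemma Kx (A : group) (i1 i2 : Zg6 -> A) : is_amalgam jj jj i1 i2 ->
  forall i j, path_metric (Sg i1 i2) (xs i1 i2 i) (xs i1 i2 j) = dz i j.
Proof.
move=> Ham i j.
case: i => [[|[|[|[|[|[|[|[|[|//]]]]]]]]] Hi]; case: j => [[|[|[|[|[|[|[|[|[|//]]]]]]]]] Hj];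
  rewrite /xs /dz /cls /=;
  first [ exact: pm0
        | apply: (L1 Ham); by vm_compute
        | apply: (L2 Ham); by vm_compute
        | apply: (Lm1 Ham); by vm_compute
        | apply: (Lm2 Ham); by vm_compute
        | apply: (L3 Ham); by vm_compute
        | apply: (L3' Ham); by vm_compute ].
Qed.

Local Open Scope ring_scope.
Definition cz (i : 'I_9) : int := if (i < 3)%N then - 2%:Z else 1.
Definition cc (i : 'I_9) : R[i] := (cz i)%:~R.

Lemma cc_conj i : (cc i)^* = cc i.
Proof. by rewrite /cc rmorph_int. Qed.

Lemma intr_sum9 (F : 'I_9 -> int) : \sum_i ((F i)%:~R : R[i]) = (\sum_i F i)%:~R.
Proof. by rewrite (big_morph (fun z : int => (z%:~R : R[i])) (@intrD _) (mulr0z 1)). Qed.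

Lemma notCSND (A : group) (i1 i2 : Zg6 -> A) : is_amalgam jj jj i1 i2 ->
  ~ path_metric_CSND (Sg i1 i2).
Proof.
move=> Ham [_ H].
have inj : injective (xs i1 i2).
  move=> i j e; have := Kx Ham i j; rewrite e pm0 /dz.
  by case: eqP => // _; case: ifP.
have nz : exists i, cc i != 0 by exists ord0; rewrite /cc /cz /= intr_eq0.
have s0 : \sum_(i < 9) cc i = 0.
  by rewrite /cc intr_sum9; apply/eqP; rewrite intr_eq0; rewrite !big_ord_recr !big_ord0 /=; vm_compute.
have := H 9%N (xs i1 i2) cc inj nz s0.
under eq_bigr => i _ do (under eq_bigr => j _ do
  rewrite Kx // cc_conj rmorph_nat /cc pmulrn -!intrM).
under eq_bigr => i _ do rewrite intr_sum9.
rewrite intr_sum9.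
have -> : (\sum_(i < 9) \sum_(j < 9) (cz i * cz j * (dz i j)%:Z)) = 0.
  by rewrite !big_ord_recr !big_ord0 /=; vm_compute.
by rewrite ltxx.
Qed.

Theorem mainTheorem15 :
  exists (H G1 G2 : group) (j1 : H -> G1) (j2 : H -> G2)
         (S1 : G1 -> Prop) (S2 : G2 -> Prop),
    (is_hom j1 /\ injective j1) /\ (is_hom j2 /\ injective j2) /\
    generates S1 /\ generates S2 /\
    path_metric_CSND S1 /\ path_metric_CSND S2 /\
        (forall (A : group) (i1 : G1 -> A) (i2 : G2 -> A),
          is_amalgam j1 j2 i1 i2 ->
          ~ path_metric_CSND (amalgam_gens i1 i2 S1 S2)).
Proof.
exists Zg3, Zg6, Zg6, jj, jj, (fun _ => True), (fun _ => True).
split; first by split; [exact: jj_hom | exact: jj_inj].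
split; first by split; [exact: jj_hom | exact: jj_inj].
split; first exact: full_gen.
split; first exact: full_gen.
split; first exact: full_CSND.
split; first exact: full_CSND.
move=> A i1 i2 Ham; exact: notCSND Ham.
Qed.
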